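(* Let $(G_k)_{k\in\mathbb Z}$ be a gibonacci sequence, let $\lambda = G_1^2 - G_0G_2$, and let $F_k$ denote the Fibonacci numbers. For every positive integer $n$ and all integers $t$ and $m$, \begin{equation*} \begin{split} &5\sum_{j = 1}^n (-F_{m - 3})^{n - j} (F_{m + 2})^j G_{j + t - 1} G_{j + t} G_{j + t + 1} G_{j + t + 2} G_{j + t + m}\\ &\qquad = F_{m + 2}^{n + 1} G_{n + t + 1}^5 - (-F_{m - 3})^n F_{m + 2} G_{t + 1}^5 - \lambda^2\left(F_{m + 2}^{n + 1} G_{n + t + 1} - (-F_{m - 3})^n F_{m + 2} G_{t + 1}\right). \end{split} \end{equation*}
   Context: A gibonacci sequence $(G_k)_{k\in\mathbb Z}$ is defined by arbitrary initial values $G_0=a$, $G_1=b$ (numbers, not both zero) and $G_k=G_{k-1}+G_{k-2}$ for all integers $k$. The Fibonacci numbers $F_k$ are the gibonacci sequence with $F_0=0$, $F_1=1$, extended to all integer indices by the same recurrence. The convention $0^0=1$ is used for powers. *)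

(* Defs.v *)
From mathcomp Require Import all_boot all_order all_algebra.
Set Implicit Arguments. Unset Strict Implicit. Unset Printing Implicit Defensive.
Import Order.TTheory GRing.Theory Num.Theory.
Local Open Scope ring_scope.

Fixpoint gib_fwd {R : nzRingType} (a b : R) (n : nat) : R * R :=
  match n with
  | 0%N => (a, b)
  | n'.+1 => let p := gib_fwd a b n' in (p.2, p.1 + p.2)
  end.

(* backward: (G_{-n}, G_{-n+1}) for n : nat *)
Fixpoint gib_bwd {R : nzRingType} (a b : R) (n : nat) : R * R :=
  match n with
  | 0%N => (a, b)
  | n'.+1 => let p := gib_bwd a b n' in (p.2 - p.1, p.1)
  end.

Definition gib {R : nzRingType} (a b : R) (k : int) : R :=
  match k with
  | Posz n => (gib_fwd a b n).1
  | Negz n => (gib_bwd a b n.+1).1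
  end.

Definition fib {R : nzRingType} (k : int) : R := gib 0 1 k.

(* Main.v *)
Require Import Defs.
From mathcomp Require Import all_boot all_order all_algebra.
From mathcomp Require Import zify ring lra.
Import Order.TTheory GRing.Theory Num.Theory.
Local Open Scope ring_scope.

Section S.
Variables (R : numFieldType) (a b : R).
Local Notation G := (gib a b).

Lemma gib_pos n : G n%:Z = (gib_fwd a b n).1 /\ G (n%:Z + 1) = (gib_fwd a b n).2.
Proof. split => //; have -> : n%:Z + 1 = n.+1%:Z by lia. by []. Qed.

Lemma gib_neg n : G (- n%:Z) = (gib_bwd a b n).1 /\ G (- n%:Z + 1) = (gib_bwd a b n).2.
Proof.
elim: n => [|n [IH1 IH2]]; first by split.
split; first by have -> : - (n.+1)%:Z = Negz n by [].
have -> : - (n.+1)%:Z + 1 = - n%:Z by lia.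
by rewrite IH1.
Qed.

Lemma gib_rec k : G (k + 2) = G (k + 1) + G k.
Proof.
case: k => n.
  have -> : Posz n + 2 = Posz n.+1 + 1 by lia.
  have [_ ->] := gib_pos n.+1. have -> : Posz n + 1 = Posz n.+1 by lia. by rewrite /gib /= addrC.
have E : Negz n = - n.+1%:Z by [].
rewrite E.
have -> : - n.+1%:Z + 2 = - n%:Z + 1 by lia.
have -> : - n.+1%:Z + 1 = - n%:Z by lia.
have [-> ->] := gib_neg n. have [-> _] := gib_neg n.+1.
rewrite /=; ring.
Qed.
End S.

Lemma rec_uniq (R : numFieldType) (u v : int -> R) :
  (forall k, u (k + 2) = u (k + 1) + u k) ->
  (forall k, v (k + 2) = v (k + 1) + v k) ->
  u 0 = v 0 -> u 1 = v 1 -> forall k, u k = v k.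
Proof.
move=> hu hv h0 h1.
have P : forall n : nat, u n%:Z = v n%:Z /\ u (n%:Z + 1) = v (n%:Z + 1).
  elim=> [|n [I1 I2]]; first by split.
  have -> : (n.+1)%:Z = n%:Z + 1 by lia.
  split => //. have -> : n%:Z + 1 + 1 = n%:Z + 2 by lia.
  by rewrite hu hv I1 I2.
have N : forall n : nat, u (- n%:Z) = v (- n%:Z) /\ u (- n%:Z + 1) = v (- n%:Z + 1).
  elim=> [|n [I1 I2]]; first by split.
  have -> : - (n.+1)%:Z + 1 = - n%:Z by lia.
  split => //.
  have e1 : - n%:Z + 1 = - (n.+1)%:Z + 2 by lia.
  have e2 : - n%:Z = - (n.+1)%:Z + 1 by lia.
  have := hu (- (n.+1)%:Z); have := hv (- (n.+1)%:Z).
  rewrite -e1 -e2 I1 I2 => ->. by move/addrI.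
case=> n; first by case: (P n).
by case: (N n.+1).
Qed.

Lemma fib_rec (R : numFieldType) k : @fib R (k + 2) = fib (k + 1) + fib k.
Proof. exact: gib_rec. Qed.

Lemma gib_shift (R : numFieldType) (a b : R) k m :
  gib a b (k + m) = fib m * gib a b (k + 1) + fib (m - 1) * gib a b k.
Proof.
pose u := fun m => gib a b (k + m).
pose v := fun m => fib m * gib a b (k + 1) + fib (m - 1) * gib a b k.
suff H : forall m, u m = v m by exact: H m.
clear m.
apply: rec_uniq.
- move=> m; rewrite /u (addrA k m 2) (addrA k m 1); exact: gib_rec.
- move=> m; rewrite /v fib_rec.
  have -> : m + 2 - 1 = (m - 1) + 2 by lia.
  have -> : m + 1 - 1 = (m - 1) + 1 by lia.
  have -> : m = (m - 1) + 1 by lia.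
  rewrite fib_rec.
  have -> : m - 1 + 1 - 1 = m - 1 by lia.
  rewrite -!addrA addKr. ring.
- rewrite /u /v addr0. have -> : (0:int) - 1 = Negz 0 by [].
  by rewrite /fib /gib /= subr0 mul0r mul1r add0r.
- rewrite /u /v subrr. by rewrite /fib /gib /= mul1r mul0r addr0.
Qed.

Lemma mu_sq (R : numFieldType) (a b : R) k :
  (gib a b (k + 1) ^+ 2 - gib a b k * gib a b (k + 2)) ^+ 2
  = (gib a b 1 ^+ 2 - gib a b 0 * gib a b 2) ^+ 2.
Proof.
pose mu := fun k => gib a b (k + 1) ^+ 2 - gib a b k * gib a b (k + 2).
have step : forall k, mu (k + 1) ^+ 2 = mu k ^+ 2.
  move=> j; rewrite /mu.
  have -> : j + 1 + 1 = j + 2 by lia.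
  rewrite (@gib_rec _ a b (j + 1)).
  have -> : j + 1 + 1 = j + 2 by lia.
  rewrite gib_rec. ring.
suff : mu k ^+ 2 = mu 0 ^+ 2 by rewrite /mu add0r.
case: k => n.
  elim: n => [//|n IH]. have -> : Posz n.+1 = n%:Z + 1 by lia. by rewrite step.
elim: n => [|n IH].
  have := step (Negz 0). have -> : Negz 0 + 1 = 0 by []. by move=> ->.
have := step (Negz n.+1). have -> : Negz n.+1 + 1 = Negz n by lia. by move=> <-.
Qed.

Lemma key (R : numFieldType) (a b : R) k m :
  let G := gib a b in let F := @fib R in
  let lambda := G 1 ^+ 2 - G 0 * G 2 in
  5 * G (k - 1) * G k * G (k + 1) * G (k + 2) * G (k + m)
  = F (m + 2) * (G (k + 1) ^+ 5 - lambda ^+ 2 * G (k + 1))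
    + F (m - 3) * (G k ^+ 5 - lambda ^+ 2 * G k).
Proof.
move=> G F lambda.
have hl : lambda ^+ 2 = (G (k + 1) ^+ 2 - G k * G (k + 2)) ^+ 2 by rewrite mu_sq.
have hm1 : G (k - 1) = G (k + 1) - G k.
  have := @gib_rec _ a b (k - 1).
  have -> : k - 1 + 2 = k + 1 by lia. have -> : k - 1 + 1 = k by lia.
  rewrite /G => ->; ring.
have e1 : F (m + 2) = 2 * F m + F (m - 1).
  rewrite /F fib_rec. have -> : m + 1 = (m - 1) + 2 by lia. rewrite fib_rec.
  have -> : m - 1 + 1 = m by lia. ring.
have e2 : F (m - 3) = 2 * F (m - 1) - F m.
  have h1 := @fib_rec R (m - 3). have h2 := @fib_rec R (m - 2).
  move: h1 h2.
  have -> : m - 3 + 2 = m - 1 by lia. have -> : m - 3 + 1 = m - 2 by lia.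
  have -> : m - 2 + 2 = m by lia. have -> : m - 2 + 1 = m - 1 by lia.
  rewrite /F => -> ->. ring.
rewrite hl hm1 e1 e2 /G (@gib_shift _ a b k m) (@gib_rec _ a b k) /F. ring.
Qed.

Lemma sum_step (R : numFieldType) (B : R) (X : nat -> R) n :
  \sum_(1 <= j < n.+2) B ^+ (n.+1 - j) * X j
  = B * \sum_(1 <= j < n.+1) B ^+ (n - j) * X j + B ^+ (n.+1 - n.+1) * X n.+1.
Proof.
rewrite big_nat_recr //= mulr_sumr; congr (_ + _).
apply: eq_big_nat => j /andP[_ hj]. by rewrite subSn // exprS mulrA.
Qed.

Theorem proposition2 (R : numFieldType) (a b : R) (hab : (a, b) != (0, 0))
    (n : nat) (hn : (0 < n)%N) (t m : int) :
  let G := gib a b in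
  let F := @fib R in
  let lambda := G 1 ^+ 2 - G 0 * G 2 in
  5 * \sum_(1 <= j < n.+1)
        (- F (m - 3)) ^+ (n - j) * F (m + 2) ^+ j
        * G (j%:Z + t - 1) * G (j%:Z + t) * G (j%:Z + t + 1)
        * G (j%:Z + t + 2) * G (j%:Z + t + m)
  = F (m + 2) ^+ n.+1 * G (n%:Z + t + 1) ^+ 5
    - (- F (m - 3)) ^+ n * F (m + 2) * G (t + 1) ^+ 5
    - lambda ^+ 2 * (F (m + 2) ^+ n.+1 * G (n%:Z + t + 1)
                     - (- F (m - 3)) ^+ n * F (m + 2) * G (t + 1)).
Proof.
move=> G F lambda. clear hn hab.
under eq_bigr do rewrite -!mulrA.
elim: n => [|n IH].
  rewrite big_geq // add0r /lambda /G /F. ring.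
rewrite sum_step.
have -> : forall (S Y : R), 5 * (- F (m - 3) * S + Y) = - F (m - 3) * (5 * S) + 5 * Y.
  move=> S Y; ring.
rewrite IH.
set k := n.+1%:Z + t.
have K := @key _ a b k m.
have -> : n%:Z + t + 1 = k by rewrite /k; lia.
rewrite subnn.
have -> : forall (Y : R), 5 * ((- F (m - 3)) ^+ 0 * (F (m + 2) ^+ n.+1 * Y))
   = F (m + 2) ^+ n.+1 * (5 * Y) by move=> Y; ring.
have -> : 5 * (G (k - 1) * (G k * (G (k + 1) * (G (k + 2) * G (k + m)))))
   = 5 * G (k - 1) * G k * G (k + 1) * G (k + 2) * G (k + m) by ring.
rewrite /G K /lambda /G /F. clearbody k. rewrite !exprS. ring.
Qed.
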